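(* $\mathfrak{d}(\beta\omega\setminus\omega,\le_{\mathrm{RK}})=2^{\mathfrak{c}}$.
   Context: $\beta\omega\setminus\omega$ is the set of nonprincipal ultrafilters on $\omega$. For ultrafilters $p,q$ on $\omega$, $p\le_{\mathrm{RK}} q$ (Rudin–Keisler) iff there is $f:\omega\to\omega$ with $p=\{A\subseteq\omega : f^{-1}(A)\in q\}$; this is a preorder, and the definitions below are applied to it verbatim. For a preorder $(P,\le)$, $F\subseteq P$ is dominating if for every $p\in P$ there is $q\in F$ with $p\le q$; $\mathfrak{d}(P,\le)$ is the minimal size of a dominating family. $\mathfrak{c}=2^{\aleph_0}$. *)

(* Defs.v *)
From HB Require Import structures.
From mathcomp Require Import all_boot all_order.
From mathcomp Require Import boolp classical_sets functions cardinality.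
Set Implicit Arguments. Unset Strict Implicit. Unset Printing Implicit Defensive.
Local Open Scope classical_set_scope.

Definition ultrafilter (U : set (set nat)) : Prop :=
  [/\ U setT, ~ U set0,
      (forall A B : set nat, U A -> A `<=` B -> U B),
      (forall A B : set nat, U A -> U B -> U (A `&` B)) &
      (forall A : set nat, U A \/ U (~` A))].

Definition nonprincipal (U : set (set nat)) : Prop := forall n : nat, ~ U [set n].

Definition betaN_minus_N : set (set (set nat)) :=
  [set U | ultrafilter U /\ nonprincipal U].

Definition RK_le (p q : set (set nat)) : Prop :=
  exists f : nat -> nat, p = [set A | q (f @^-1` A)].

Definition dominating {T} (P : set T) (le : T -> T -> Prop) (F : set T) : Prop :=
  F `<=` P /\ forall p, P p -> exists2 q, F q & le p q.

(* d(P, <=) = kappa, with kappa given as the cardinality of a set K: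
   some dominating family has cardinality |K| and every dominating family
   has cardinality at least |K| (i.e. |K| is the minimum). *)
Definition dom_number_is {T U} (P : set T) (le : T -> T -> Prop) (K : set U) : Prop :=
  (exists F, dominating P le F /\ (F #= K)%card) /\
  (forall F, dominating P le F -> (K #<= F)%card).

(* Main.v *)
Require Import Defs.
From mathcomp Require Import all_boot all_order.
From mathcomp Require Import boolp classical_sets functions cardinality filter.
From Stdlib Require List.
Local Open Scope classical_set_scope.
Local Open Scope card_scope.

Lemma mk_card_le T U (A : set T) (B : set U) (f : T -> U) :
  (forall x, A x -> B (f x)) -> (forall x y, A x -> A y -> f x = f y -> x = y) ->
  A #<= B.
Proof.
move=> hf hi.
have : $|{injfun A >-> B}|.
  apply/injfunPex; exists f; first by move=> x; apply: hf.
  by move=> x y; rewrite !inE; apply: hi.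
by case=> g; exact: inj_card_le g.
Qed.

Lemma ev_list (T : Type) (L : list T) (Q : T -> nat -> Prop) :
  (forall x, List.In x L -> exists k, forall m, (k <= m)%N -> Q x m) ->
  exists k, forall m, (k <= m)%N -> forall x, List.In x L -> Q x m.
Proof.
elim: L => [|a L IH] H; first by exists 0%N => m _ x [].
have [k1 H1] := H a (or_introl erefl).
have [k2 H2] := IH (fun x h => H x (or_intror h)).
exists (maxn k1 k2) => m hm x [<-|hx].
  by apply: H1; apply: leq_trans hm; exact: leq_maxl.
by apply: H2 => //; apply: leq_trans hm; exact: leq_maxr.
Qed.

Section Indep.
Variables (J : Type) (V : countType) (tr : J -> nat -> V).
Hypothesis Htr : forall j j', j <> j' ->
  exists k, forall m, (k <= m)%N -> tr j m <> tr j' m.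

Definition CC := (nat * seq V)%type.
Definition Aj (j : J) : set CC := [set c | tr j c.1 \in c.2].
Definition box (P N : seq J) (E : seq CC) : set CC :=
  [set c | (forall j, List.In j P -> Aj j c) /\ (forall j, List.In j N -> ~ Aj j c)
     /\ ~ List.In c E].
Definition Big (X : set J) : set (set CC) :=
  [set S | exists P N E, (forall j, List.In j P -> X j) /\
     (forall j, List.In j N -> ~ X j) /\ box P N E `<=` S].

Lemma in_map_tr (P : seq J) m j : List.In j P -> tr j m \in map (tr ^~ m) P.
Proof.
elim: P => //= a P IH [->|h]; first by rewrite in_cons eqxx.
by rewrite in_cons IH ?orbT.
Qed.

Lemma map_tr_in (P : seq J) m v : v \in map (tr ^~ m) P ->
  exists2 p, List.In p P & v = tr p m.
Proof.
elim: P => //= a P IH; rewrite in_cons => /orP[/eqP ->|h].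
  by exists a => //; left.
by have [p hp ->] := IH h; exists p => //; right.
Qed.

Lemma box_nonempty (X : set J) P N E :
  (forall j, List.In j P -> X j) -> (forall j, List.In j N -> ~ X j) ->
  box P N E !=set0.
Proof.
move=> hP hN.
have [k1 H1] : exists k, forall m, (k <= m)%N -> forall p, List.In p P ->
    forall n, List.In n N -> tr p m <> tr n m.
  apply: ev_list => p hp; apply: ev_list => n hn; apply: Htr => e.
  by subst; exact: (hN _ hn (hP _ hp)).
have [k2 H2] : exists k, forall m, (k <= m)%N -> forall e, List.In e E ->
    e.1 <> m.
  apply: ev_list => e _; exists e.1.+1 => m hm h; subst.
  by rewrite ltnn in hm.
set m := maxn k1 k2.
exists (m, map (tr ^~ m) P); split; [|split].
- by move=> j hj; rewrite /Aj /=; exact: in_map_tr.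
- move=> n hn; rewrite /Aj /= => /map_tr_in [p hp e].
  by apply: (H1 m (leq_maxl _ _) p hp n hn).
- by move=> hE; exact: (H2 m (leq_maxr _ _) _ hE).
Qed.

Lemma Big_proper X : ProperFilter (Big X).
Proof.
apply: Build_ProperFilter_ex.
  move=> S [P [N [E [hP [hN hS]]]]].
  have [c hc] := box_nonempty X P N E hP hN.
  by exists c; exact: hS.
split.
- by exists [::], [::], [::].
- move=> S T [P [N [E [hP [hN hS]]]]] [P' [N' [E' [hP' [hN' hS']]]]].
  exists (P ++ P'), (N ++ N'), (E ++ E'); split; [|split].
  + by move=> j /List.in_app_iff [] ?; [apply: hP|apply: hP'].
  + by move=> j /List.in_app_iff [] ?; [apply: hN|apply: hN'].
  + move=> c [cP [cN cE]]; split.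
      apply: hS; split; [|split].
      * by move=> j h; apply: cP; apply/List.in_app_iff; left.
      * by move=> j h; apply: cN; apply/List.in_app_iff; left.
      * by move=> h; apply: cE; apply/List.in_app_iff; left.
    apply: hS'; split; [|split].
      * by move=> j h; apply: cP; apply/List.in_app_iff; right.
      * by move=> j h; apply: cN; apply/List.in_app_iff; right.
      * by move=> h; apply: cE; apply/List.in_app_iff; right.
- move=> S T ST [P [N [E [hP [hN hS]]]]].
  by exists P, N, E; split; [|split] => //; apply: subset_trans ST.
Qed.


Definition UC (X : set J) : set (set CC) :=
  projT1 (cid (ultraFilterLemma (Big_proper X))).
Lemma UC_spec X : UltraFilter (UC X) /\ Big X `<=` UC X.
Proof. exact: (projT2 (cid (ultraFilterLemma (Big_proper X)))). Qed.

Lemma UC_filter X : Filter (UC X).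
Proof. by have [[[_ F] _] _] := UC_spec X. Qed.
Lemma UC_not0 X : ~ UC X set0.
Proof. by have [[[F _] _] _] := UC_spec X. Qed.

Lemma UC_disj X (A B : set CC) : UC X A -> UC X B -> A `&` B `<=` set0 -> False.
Proof.
move=> hA hB hAB; apply: (UC_not0 X).
have F := UC_filter X.
by apply: filterS hAB _; apply: filterI.
Qed.

Lemma pickle_inj' : injective (@pickle CC).
Proof. exact: pcan_inj (@pickleK_inv CC). Qed.

Definition Psi X : set (set nat) := [set A | UC X (pickle @^-1` A)].

Lemma Psi_beta X : betaN_minus_N (Psi X).
Proof.
have F := UC_filter X.
split; first split.
- exact: filterT.
- exact: UC_not0.
- move=> A B hA AB; apply: filterS hA => c; exact: AB.
- move=> A B hA hB; exact: filterI.
- move=> A; have [U _] := UC_spec X; exact: (@in_ultra_setVsetC _ (UC X) (pickle @^-1` A) U).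
- move=> n hn.
  have hc : forall c, UC X (~` [set c]).
    move=> c; apply: (UC_spec X).2; exists [::], [::], [:: c]; split; [|split] => //.
    by move=> d [_ [_ hd]] e; apply: hd; rewrite e; left.
  have [U _] := UC_spec X.
  have [c hc1] := @filter_ex _ _ (@ultra_proper _ _ U) _ hn.
  apply: (@UC_disj X _ _ hn (hc c)) => d [hd1 hd2]; apply: hd2.
  by apply: pickle_inj'; rewrite /preimage /= in hd1 hc1; rewrite hd1 hc1.
Qed.

Lemma Psi_incl X Y j : Psi X = Psi Y -> X j -> Y j.
Proof.
move=> e hX; apply: contrapT => hY.
have h1 : UC X (Aj j).
  apply: (UC_spec X).2; exists [:: j], [::], [::]; split; [|split] => //.
    by move=> k [<-|[]].
  by move=> c [hc _]; apply: hc; left.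
have h2 : UC Y (~` Aj j).
  apply: (UC_spec Y).2; exists [::], [:: j], [::]; split; [|split] => //.
    by move=> k [<-|[]].
  by move=> c [_ [hc _]]; apply: hc; left.
have h3 : Psi X (pickle @` Aj j).
  have F := UC_filter X.
  by apply: filterS h1 => c hc; exists c.
rewrite e in h3.
apply: (@UC_disj Y _ _ h3 h2) => c [[d hd ed] hc]; apply: hc.
by rewrite -(pickle_inj' _ _ ed).
Qed.

Lemma Psi_inj X Y : Psi X = Psi Y -> X = Y.
Proof.
move=> e; apply: funext => j; apply: propext; split.
  exact: Psi_incl.
exact: Psi_incl (esym e).
Qed.

End Indep.

Definition JJ := ((nat -> nat) * set nat)%type.
Definition trJ (j : JJ) (m : nat) : (seq nat * seq bool)%type :=
  (map j.1 (iota 0 m), map (fun i => `[< j.2 i >]) (iota 0 m)).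

Lemma trJ_ok : forall j j' : JJ, j <> j' ->
  exists k, forall m, (k <= m)%N -> trJ j m <> trJ j' m.
Proof.
case=> f B [f' B'] ne.
have [hf|hf] := pselect (f = f').
- subst f'.
  have nB : B <> B' by move=> e; apply: ne; rewrite e.
  have [k hk] : exists k, ~ (B k <-> B' k).
    apply: contrapT => h; apply: nB; apply: funext => k; apply: propext.
    by apply: contrapT => hk; apply: h; exists k.
  exists k.+1 => m hm e.
  have := congr1 (fun p => nth false p.2 k) e.
  rewrite /= !(nth_map 0) ?size_iota // nth_iota // add0n => eb.
  apply: hk; split => h.
    by apply/asboolP; rewrite -eb; apply/asboolP.
  by apply/asboolP; rewrite eb; apply/asboolP.
- have [k hk] : exists k, f k <> f' k.
    apply: contrapT => h; apply: hf; apply: funext => k.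
    by apply: contrapT => hk; apply: h; exists k.
  exists k.+1 => m hm e.
  have := congr1 (fun p => nth 0 p.1 k) e.
  by rewrite /= !(nth_map 0) ?size_iota // nth_iota.
Qed.


Definition Phi (phi : (nat -> nat) -> set (set nat)) : set (set nat) :=
  @Psi _ _ trJ trJ_ok [set p : JJ | phi p.1 p.2].

Lemma Phi_beta phi : betaN_minus_N (Phi phi).
Proof. exact: Psi_beta. Qed.

Lemma Phi_inj phi psi : Phi phi = Phi psi -> phi = psi.
Proof.
move=> /Psi_inj e; apply: funext => f; apply: funext => B.
exact: (congr1 (fun X : set JJ => X (f, B)) e).
Qed.

Theorem mainTheorem18 :
  dom_number_is betaN_minus_N RK_le [set: set (set nat)].
Proof.
split.
  exists betaN_minus_N; split.
    by split => // p hp; exists p => //; exists id.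
  apply: Cantor_Bernstein; first exact: card_leT.
  apply: (@mk_card_le _ _ _ _ (fun S => Phi (fun _ => S))).
    by move=> S _; exact: Phi_beta.
  by move=> S1 S2 _ _ /Phi_inj e; exact: (congr1 (fun phi => phi id) e).
move=> F [FB Fd]; apply: contrapT => hno.
have hQ : forall phi, exists q, F q /\ exists f : nat -> nat,
    Phi phi = [set A | q (f @^-1` A)].
  by move=> phi; have [q hq [f hf]] := Fd _ (Phi_beta phi); exists q; split => //; exists f.
have [Q hQ'] : exists Q : _ -> set (set nat), forall phi, F (Q phi) /\
    exists f : nat -> nat, Phi phi = [set A | Q phi (f @^-1` A)].
  by exists (fun phi => projT1 (cid (hQ phi))) => phi; exact: (projT2 (cid (hQ phi))).
have [Fn hFn] : exists Fn : _ -> (nat -> nat), forall phi,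
    Phi phi = [set A | Q phi (Fn phi @^-1` A)].
  by exists (fun phi => projT1 (cid (hQ' phi).2)) => phi;
    exact: (projT2 (cid (hQ' phi).2)).
pose g (i : nat -> nat) (q : set (set nat)) : set (set nat) :=
  [set B | exists phi, Q phi = q /\ Fn phi = i /\ phi i B].
have hg : forall phi, g (Fn phi) (Q phi) = phi (Fn phi).
  move=> phi; apply: funext => B; apply: propext; split; last by move=> h; exists phi.
  move=> [psi [e1 [e2 h]]].
  have epsi : psi = phi by apply: Phi_inj; rewrite hFn hFn e1 e2.
  by rewrite epsi in h.
have hy : forall i, exists y : set (set nat), forall q, F q -> g i q <> y.
  move=> i; apply: contrapT => hn; apply: hno.
  have hs : forall y, exists q, F q /\ g i q = y.
    move=> y; apply: contrapT => hy; apply: hn; exists y => q Fq e.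
    by apply: hy; exists q.
  apply: (@mk_card_le _ _ _ _ (fun y => projT1 (cid (hs y)))).
    by move=> y _; exact: (projT2 (cid (hs y))).1.
  move=> y1 y2 _ _ /= e.
  have := (projT2 (cid (hs y1))).2; have := (projT2 (cid (hs y2))).2.
  by move=> h2 h1; rewrite -h1 -h2; congr (g i _); exact: e.
pose y := fun i => projT1 (cid (hy i)).
apply: (projT2 (cid (hy (Fn y))) (Q y) (hQ' y).1).
by rewrite hg.
Qed.
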